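(* Let $n\ge 2$ and let $D$ be a domain in $\mathbb{R}^n$ with at least two boundary points. Suppose that $x_0\in D$, $0<t<1$, and $y\in B^n(x_0,t\,d(x_0,\partial D))$. Then $$\frac{1}{C'}\leq\frac{\lambda'_D(x_0)}{\lambda'_D(y)}\leq C',\qquad\text{where } C'=\frac{1+\log\frac{1}{1-t}}{1-t}.$$
   Context: $B^n(x,r)=\{y\in\mathbb{R}^n:|y-x|<r\}$ and $d(z,\partial D)=\inf\{|z-a|:a\in\partial D\}$. For $z\in D$, $$\frac{1}{\lambda'_D(z)}=\inf\Big\{|z-a|\Big(1+\Big|\log\frac{|a-b|}{|z-a|}\Big|\Big): a,b\in\partial D\Big\}$$ (with the convention that the expression equals $+\infty$ when $a=b$). *)

(* Defs.v *)
(* Points of R^n are row vectors 'rV[R]_n;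
   the topology is the library's (product) topology on 'rV[R]_n, which is
   the Euclidean topology; distances use the explicit Euclidean norm. *)
From HB Require Import structures.
From mathcomp Require Import all_boot all_order all_algebra.
From mathcomp Require Import all_classical all_reals all_analysis.
Set Implicit Arguments. Unset Strict Implicit. Unset Printing Implicit Defensive.
Import Order.TTheory GRing.Theory Num.Theory.
Import numFieldNormedType.Exports.
Local Open Scope classical_set_scope.
Local Open Scope ring_scope.

Definition enorm {R : realType} {n : nat} (x : 'rV[R]_n) : R :=
  Num.sqrt (\sum_(i < n) x ord0 i ^+ 2).

Definition domain {R : realType} {n : nat} (D : set 'rV[R]_n) : Prop :=
  [/\ D !=set0, open D & connected D].

Definition bdry {R : realType} {n : nat} (D : set 'rV[R]_n) : set 'rV[R]_n :=
  closure D `\` interior D.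

Definition dist_bdry {R : realType} {n : nat} (D : set 'rV[R]_n) (z : 'rV[R]_n) : R :=
  inf [set enorm (z - a) | a in bdry D].

(* 1/lambda'_D(z): the infimum over pairs a <> b of boundary points
   (pairs with a = b give +oo and are omitted) *)
Definition lam_inv {R : realType} {n : nat} (D : set 'rV[R]_n) (z : 'rV[R]_n) : R :=
  inf [set r | exists a b, [/\ bdry D a, bdry D b, a <> b &
        r = enorm (z - a) * (1 + `|ln (enorm (a - b) / enorm (z - a))|)]].

Definition lambda' {R : realType} {n : nat} (D : set 'rV[R]_n) (z : 'rV[R]_n) : R :=
  (lam_inv D z)^-1.

(* Main.v *)
Require Import Defs.
From HB Require Import structures.
From mathcomp Require Import all_boot all_order all_algebra.
From mathcomp Require Import all_classical all_reals all_analysis.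
From mathcomp Require Import ring lra.
Import Order.TTheory GRing.Theory Num.Theory.
Import numFieldNormedType.Exports.
Local Open Scope classical_set_scope.
Local Open Scope ring_scope.

Section E.
Variables (R : realType) (n : nat).
Implicit Types u v : 'rV[R]_n.

Lemma sumsq_ge0 (u : 'rV[R]_n) : 0 <= \sum_(i < n) u ord0 i ^+ 2.
Proof. by apply: sumr_ge0 => i _; exact: sqr_ge0. Qed.

Lemma enorm_ge0 u : 0 <= enorm u.
Proof. exact: sqrtr_ge0. Qed.

Lemma enormN u : enorm (- u) = enorm u.
Proof. by rewrite /enorm; congr Num.sqrt; apply: eq_bigr => i _; rewrite mxE sqrrN. Qed.

Lemma enorm_sqr u : enorm u ^+ 2 = \sum_(i < n) u ord0 i ^+ 2.
Proof. by rewrite sqr_sqrtr // sumsq_ge0. Qed.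

Lemma enorm_eq0 u : enorm u = 0 -> u = 0.
Proof.
move=> h; have : \sum_(i < n) u ord0 i ^+ 2 = 0 by rewrite -enorm_sqr h expr0n.
move/eqP; rewrite psumr_eq0; last by move=> i _; exact: sqr_ge0.
move/allP => H; apply/rowP => i; rewrite mxE.
by have /= := H i (mem_index_enum _); rewrite sqrf_eq0 => /eqP.
Qed.

Lemma cs u v : \sum_(i < n) u ord0 i * v ord0 i <= enorm u * enorm v.
Proof.
set a := enorm u; set b := enorm v; set S := \sum_(i < n) _.
have a0 : 0 <= a by exact: enorm_ge0.
have b0 : 0 <= b by exact: enorm_ge0.
have H : 0 <= \sum_(i < n) (u ord0 i * b - v ord0 i * a) ^+ 2.
  by apply: sumr_ge0 => i _; exact: sqr_ge0.
have E : \sum_(i < n) (u ord0 i * b - v ord0 i * a) ^+ 2 =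
   b ^+ 2 * a ^+ 2 - 2 * a * b * S + a ^+ 2 * b ^+ 2.
  rewrite /a /b !enorm_sqr /S !mulr_sumr -!sumrN -!big_split /=.
  apply: eq_bigr => i _; rewrite -!enorm_sqr -/a -/b; ring.
rewrite E in H.
have [ab0|abp] := eqVneq (a * b) 0.
  move/eqP: ab0; rewrite mulf_eq0 => /orP [] /eqP e.
    have u0 : u = 0 by apply: enorm_eq0.
    by rewrite /S big1 ?e ?mul0r // => i _; rewrite u0 mxE mul0r.
  have v0 : v = 0 by apply: enorm_eq0.
  by rewrite /S big1 ?e ?mulr0 // => i _; rewrite v0 mxE mulr0.
have abg : 0 < a * b by rewrite lt_neqAle eq_sym abp mulr_ge0.
nra.
Qed.

Lemma enormD u v : enorm (u + v) <= enorm u + enorm v.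
Proof.
rewrite -(ler_pXn2r (n:=2)) // ?nnegrE ?addr_ge0 ?enorm_ge0 //.
rewrite enorm_sqr.
have -> : \sum_(i < n) (u + v) ord0 i ^+ 2 = \sum_(i < n) u ord0 i ^+ 2 +
   \sum_(i < n) v ord0 i ^+ 2 + 2 * \sum_(i < n) u ord0 i * v ord0 i.
  rewrite (eq_bigr (fun i => u ord0 i ^+2 + v ord0 i ^+ 2 + 2 * (u ord0 i * v ord0 i))).
    by rewrite !big_split /= -mulr_sumr.
  by move=> i _; rewrite mxE; ring.
rewrite -!enorm_sqr; have := cs u v; nra.
Qed.

End E.
Arguments enorm_ge0 {R n}.
Arguments enormN {R n}.
Arguments enormD {R n}.
Arguments enorm_eq0 {R n}.
Lemma key (R : realType) (r r' s K : R) : 0 < r -> 0 < r' -> 0 < s -> 1 <= K ->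
  r' <= K * r -> r <= K * r' ->
  r' * (1 + `|ln (s / r')|) <= K * (1 + ln K) * (r * (1 + `|ln (s / r)|)).
Proof.
move=> r0 r'0 s0 K1 h1 h2.
have K0 : 0 < K by apply: lt_le_trans K1.
have lK : 0 <= ln K by apply: ln_ge0.
have hl : ln (s / r') = ln (s / r) + ln (r / r').
  by rewrite !ln_div ?posrE //; ring.
have L1 : ln (r / r') <= ln K.
  by rewrite ler_ln ?posrE ?divr_gt0 // ler_pdivrMr.
have L2 : - ln (r / r') <= ln K.
  have -> : - ln (r / r') = ln (r' / r) by rewrite !ln_div ?posrE //; ring.
  by rewrite ler_ln ?posrE ?divr_gt0 // ler_pdivrMr.
have X : `|ln (s / r')| <= `|ln (s / r)| + ln K.
  rewrite hl; apply: (le_trans (ler_normD _ _)); rewrite lerD2l ler_norml.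
  by rewrite L1 andbT lerNl.
set A := `|ln (s / r')| in X *; set B := `|ln (s / r)| in X *; set L := ln K in X lK *.
have B0 : 0 <= B by rewrite /B normr_ge0.
have e1 : r' * (1 + A) <= r' * (1 + B + L) by rewrite ler_pM2l //; lra.
have e2 : r' * (1 + B + L) <= K * r * (1 + B + L) by rewrite ler_pM2r //; lra.
have e3 : 1 + B + L <= (1 + L) * (1 + B) by nra.
have e4 : K * r * (1 + B + L) <= K * r * ((1 + L) * (1 + B)).
  by rewrite ler_pM2l ?mulr_gt0.
have -> : K * (1 + L) * (r * (1 + B)) = K * r * ((1 + L) * (1 + B)) by ring.
lra.
Qed.

Section Main.
Variables (R : realType) (n : nat) (D : set 'rV[R]_n).

Definition gg (z a b : 'rV[R]_n) :=
  enorm (z - a) * (1 + `|ln (enorm (a - b) / enorm (z - a))|).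

Lemma lamset_lb (z : 'rV[R]_n) :
  has_lbound [set r | exists a b, [/\ bdry D a, bdry D b, a <> b &
        r = enorm (z - a) * (1 + `|ln (enorm (a - b) / enorm (z - a))|)]].
Proof.
exists 0 => e [a [b [_ _ _ ->]]].
by rewrite mulr_ge0 ?enorm_ge0 // addr_ge0.
Qed.

Lemma cmp (z w : 'rV[R]_n) C : 0 < C ->
  (exists a b, bdry D a /\ bdry D b /\ a <> b) ->
  (forall a b, bdry D a -> bdry D b -> a <> b -> gg z a b <= C * gg w a b) ->
  lam_inv D z <= C * lam_inv D w.
Proof.
move=> C0 [a0 [b0 [ha0 [hb0 hab0]]]] H.
rewrite -ler_pdivrMl //; apply: lb_le_inf.
  by exists (gg w a0 b0); exists a0, b0; split.
move=> e [a [b [ha hb hab ->]]].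
rewrite ler_pdivrMl //; apply: le_trans (H a b ha hb hab).
by apply: (ge_inf (lamset_lb z)); exists a, b; split.
Qed.

Lemma lam_lb (z : 'rV[R]_n) m :
  (exists a b, bdry D a /\ bdry D b /\ a <> b) ->
  (forall a, bdry D a -> m <= enorm (z - a)) -> m <= lam_inv D z.
Proof.
move=> [a0 [b0 [ha0 [hb0 hab0]]]] H; apply: lb_le_inf.
  by exists (gg z a0 b0); exists a0, b0; split.
move=> e [a [b [ha hb hab ->]]].
apply: le_trans (H a ha) _.
have := @enorm_ge0 _ _ (z - a); have : 0 <= `|ln (enorm (a - b) / enorm (z - a))| by [].
nra.
Qed.

End Main.
Arguments gg {R n}.
Arguments cmp {R n D}.
Arguments lam_lb {R n D}.

Theorem lemma9 (R : realType) (n : nat) (D : set 'rV[R]_n)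
  (x0 y : 'rV[R]_n) (t : R) :
  (2 <= n)%N -> domain D ->
  (exists a b, bdry D a /\ bdry D b /\ a <> b) ->
  D x0 -> 0 < t -> t < 1 ->
  enorm (y - x0) < t * dist_bdry D x0 ->
  let C' := (1 + ln (1 / (1 - t))) / (1 - t) in
  1 / C' <= lambda' D x0 / lambda' D y <= C'.
Proof.
move=> _ _ hex _ t0 t1 hy; rewrite /=; set C' := (1 + ln (1 / (1 - t))) / (1 - t).
set d := dist_bdry D x0 in hy.
set e := enorm (y - x0) in hy.
have e0 : 0 <= e by exact: enorm_ge0.
have d0 : 0 < d.
  have : 0 < t * d by apply: le_lt_trans hy.
  by rewrite pmulr_rgt0.
have hd : forall a, bdry D a -> d <= enorm (x0 - a).
  move=> a ha; apply: (ge_inf); last by exists a.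
  by exists 0 => _ [b _ <-]; exact: enorm_ge0.
set K := (1 - t)^-1.
have t10 : 0 < 1 - t by lra.
have K1 : 1 <= K by rewrite /K invr_ge1 ?unitfE ?gt_eqF //; lra.
have K0 : 0 < K by lra.
have hC : C' = K * (1 + ln K) by rewrite /C' /K div1r mulrC.
have C0 : 0 < C'.
  by rewrite hC mulr_gt0 //; have := ln_ge0 K1; lra.
have hcmp : forall a b, bdry D a -> bdry D b -> a <> b ->
    gg y a b <= C' * gg x0 a b /\ gg x0 a b <= C' * gg y a b.
  move=> a b ha hb hab.
  have r1 := hd a ha.
  set r := enorm (x0 - a) in r1 *.
  set r' := enorm (y - a).
  have r0 : 0 < r by lra.
  have h1 : r' <= e + r.
    by rewrite /r' /e /r -{1}(subrK x0 y) -addrA; exact: enormD.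
  have h2 : r <= e + r'.
    rewrite /r' /e /r -(enormN (y - x0)) opprB -{1}(subrK y x0) -addrA.
    exact: enormD.
  have ted : t * d <= t * r by rewrite ler_pM2l.
  have r'0 : 0 < r' by nra.
  have s0 : 0 < enorm (a - b).
    rewrite lt_neqAle enorm_ge0 andbT eq_sym; apply/eqP => /enorm_eq0 /eqP.
    by rewrite subr_eq0 => /eqP.
  have hK1 : r' <= K * r.
    rewrite /K mulrC ler_pdivlMr //.
    nra.
  have hK2 : r <= K * r'.
    rewrite /K mulrC ler_pdivlMr //.
    nra.
  rewrite hC /gg; split.
    by apply: key.
  by apply: key.
have Lyx : lam_inv D y <= C' * lam_inv D x0.
  by apply: cmp => // a b ha hb hab; case: (hcmp a b ha hb hab).
have Lxy : lam_inv D x0 <= C' * lam_inv D y.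
  by apply: cmp => // a b ha hb hab; case: (hcmp a b ha hb hab).
have lx0 : 0 < lam_inv D x0.
  by apply: lt_le_trans d0 _; apply: lam_lb.
have ly0 : 0 < lam_inv D y.
  have : 0 < C' * lam_inv D y by lra.
  by rewrite pmulr_rgt0.
set lx := lam_inv D x0 in Lyx Lxy lx0 *; set ly := lam_inv D y in Lyx Lxy ly0 *.
have -> : lambda' D x0 / lambda' D y = ly / lx by rewrite /lambda' invrK mulrC.
apply/andP; split.
  by rewrite ler_pdivlMr // div1r ler_pdivrMl.
by rewrite ler_pdivrMr.
Qed.
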